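(* Let $q$ be a power of $2$ and $v\ge1$ an integer. In the affine space $AG(2v,q)$ over $\mathbb{F}_q$ let $K=\{(a_1,a_1^2,a_2,a_2^2,\dots,a_v,a_v^2): a_1,\dots,a_v\in\mathbb{F}_q\}$ and $A=AG(2v,q)\setminus K$. Then for every point $X\in A$, the number of lines of $AG(2v,q)$ through $X$ that are entirely contained in $A$ equals $B_{q,v}-q^v+\frac12(q-2)$, where $B_{q,v}=\frac{q^{2v}-1}{q-1}$.
   Context: Points of $AG(2v,q)$ are the vectors of $\mathbb{F}_q^{2v}$, and lines are the cosets of 1-dimensional subspaces; $B_{q,v}=(q^{2v}-1)/(q-1)$ is the number of lines through any point. *)

(* Defs.v *)
From HB Require Import structures.
From mathcomp Require Import all_boot all_order all_algebra.
Set Implicit Arguments. Unset Strict Implicit. Unset Printing Implicit Defensive.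
Import GRing.Theory.
Local Open Scope ring_scope.

(* The line through x with direction d: the coset x + <d> (a line when d != 0). *)
Definition line (F : finFieldType) (n : nat) (x d : 'rV[F]_n) : {set 'rV[F]_n} :=
  [set x + t *: d | t : F].

Definition lines (F : finFieldType) (n : nat) : {set {set 'rV[F]_n}} :=
  [set line p.1 p.2 | p in [set p : 'rV[F]_n * 'rV[F]_n | p.2 != 0]].

Lemma half_ord_lt (v : nat) (j : 'I_(v.*2)) : (j./2 < v)%N.
Proof.
case: j => j hj /=; rewrite -ltn_double; apply: leq_ltn_trans hj.
by rewrite -{2}(odd_double_half j) leq_addl.
Qed.

Definition ohalf (v : nat) (j : 'I_(v.*2)) : 'I_v := Ordinal (half_ord_lt j).

(* The point (a_1, a_1^2, a_2, a_2^2, ..., a_v, a_v^2) of AG(2v,q):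
   coordinate 2i (0-based) is a_i, coordinate 2i+1 is a_i^2. *)
Definition Kpt (F : finFieldType) (v : nat) (a : {ffun 'I_v -> F}) : 'rV[F]_(v.*2) :=
  \row_(j < v.*2) (if odd j then a (ohalf j) ^+ 2 else a (ohalf j)).

Definition Kset (F : finFieldType) (v : nat) : {set 'rV[F]_(v.*2)} :=
  [set Kpt a | a : {ffun 'I_v -> F}].

Definition Aset (F : finFieldType) (v : nat) : {set 'rV[F]_(v.*2)} :=
  ~: Kset F v.

Definition Bqv (q v : nat) : nat := ((q ^ (2 * v) - 1) %/ (q - 1))%N.

(* Main.v *)
Require Import Defs.
From HB Require Import structures.
From mathcomp Require Import all_boot all_order all_algebra finfield.
From mathcomp Require Import ring lra zify.
Set Implicit Arguments. Unset Strict Implicit. Unset Printing Implicit Defensive.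
Import GRing.Theory.
Local Open Scope ring_scope.

Section P12.
Variables (F : finFieldType) (v : nat) (X : 'rV[F]_(v.*2)).
Hypothesis hX : X \in Aset F v.
Hypothesis h2 : (2%:R : F) = 0.

Lemma ev_lt (i : 'I_v) : (i.*2 < v.*2)%N. Proof. by rewrite ltn_double. Qed.
Lemma od_lt (i : 'I_v) : (i.*2.+1 < v.*2)%N. Proof. by rewrite ltn_Sdouble. Qed.
Definition ev (i : 'I_v) : 'I_(v.*2) := Ordinal (ev_lt i).
Definition od (i : 'I_v) : 'I_(v.*2) := Ordinal (od_lt i).
Definition c0 (Y : 'rV[F]_(v.*2)) i := Y 0 (ev i).
Definition c1 (Y : 'rV[F]_(v.*2)) i := Y 0 (od i).

Lemma ohalf_ev i : ohalf (ev i) = i.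
Proof. by apply: val_inj; rewrite /= doubleK. Qed.
Lemma ohalf_od i : ohalf (od i) = i.
Proof. by apply: val_inj; rewrite /= uphalf_double. Qed.

Lemma inK Y : (Y \in Kset F v) = [forall i, c1 Y i == c0 Y i ^+ 2].
Proof.
apply/imsetP/forallP.
  case=> a _ -> i; rewrite /c1 /c0 /Kpt !mxE ohalf_ev ohalf_od /= odd_double /=.
  by [].
move=> H; exists [ffun i => c0 Y i] => //; apply/rowP => j; rewrite !mxE ffunE.
set i := ohalf j.
have Hj : j = if odd j then od i else ev i.
  apply: val_inj; rewrite -[LHS](odd_double_half j); case: (odd j) => /=.
    by rewrite add1n.
  by rewrite add0n.
case: (odd j) Hj => -> /=; last by [].
by apply/eqP/H.
Qed.


Local Notation V := 'rV[F]_(v.*2).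

Lemma line_scale (x d : V) c : c != 0 -> line x (c *: d) = line x d.
Proof.
move=> c0; apply/setP => y; apply/imsetP/imsetP; case=> t _ ->.
  by exists (t * c) => //; rewrite scalerA.
by exists (t / c) => //; rewrite scalerA divfK.
Qed.

Lemma line_shift (x d : V) t : line (x + t *: d) d = line x d.
Proof.
apply/setP => y; apply/imsetP/imsetP; case=> s _ ->.
  by exists (t + s) => //; rewrite scalerDl addrA.
by exists (s - t) => //; rewrite -addrA -scalerDl [t + _]addrC subrK.
Qed.

Definition h (Y : V) := line X (Y - X).

Lemma mem_h Y : Y \in h Y.
Proof. by apply/imsetP; exists 1 => //; rewrite scale1r addrC subrK. Qed.

Lemma X_in_h Y : X \in h Y.
Proof. by apply/imsetP; exists 0 => //; rewrite scale0r addr0. Qed.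

Lemma h_eq Y Z : Z != X -> (h Z == h Y) = [exists l, Z == X + l *: (Y - X)].
Proof.
move=> hZ; apply/eqP/existsP.
  move=> e; have := mem_h Z; rewrite e => /imsetP [t _ ->].
  by exists t.
case=> l /eqP eZ.
have l0 : l != 0.
  by apply: contraNneq hZ => l0; rewrite eZ l0 scale0r addr0.
by rewrite /h eZ addrC addKr line_scale.
Qed.

Definition LX := [set L in lines F (v.*2) | X \in L].

Lemma LX_eq : LX = h @: ~: [set X].
Proof.
apply/setP => L; apply/idP/imsetP.
  rewrite inE => /andP [/imsetP [[p d] /=]]; rewrite inE /= => d0 -> /imsetP [t _ eX].
  exists (X + d).
    by rewrite !inE; apply: contra d0 => /eqP e; rewrite -(addrI _ (etrans e (esym (addr0 X)))).
  by rewrite /h addrC addKr eX line_shift.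
case=> Y Y_in ->; rewrite inE X_in_h andbT.
apply/imsetP; exists (X, Y - X) => //.
by rewrite inE /= subr_eq0; move: (Y_in); rewrite !inE.
Qed.

Lemma fiber_card Y : Y != X ->
  #|[set Z in ~: [set X] | h Z == h Y]| = #|F|.-1.
Proof.
move=> hY.
have inj : injective (fun l : F => X + l *: (Y - X)).
  move=> l l' /addrI /eqP; rewrite -subr_eq0 -scalerBl scaler_eq0 subr_eq0.
  by rewrite (negbTE (_ : Y - X != 0)) ?orbF ?subr_eq0 // => /eqP.
rewrite -(cardsC1 (0:F)) -(card_imset _ inj); apply: eq_card => Z.
rewrite !inE; apply/idP/imsetP.
  case/andP=> hZ; rewrite h_eq // => /existsP [l /eqP eZ].
  exists l => //; rewrite !inE; apply: contraNneq hZ => l0.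
  by rewrite eZ l0 scale0r addr0.
case=> l; rewrite !inE => l0 ->.
have hZ : X + l *: (Y - X) != X.
  rewrite -subr_eq0 addrC addKr scaler_eq0 negb_or l0 /= subr_eq0 //.
by rewrite hZ h_eq //; apply/existsP; exists l.
Qed.

Lemma card_LX : (#|LX| * #|F|.-1 = (#|F| ^ (v.*2)).-1)%N.
Proof.
have e1 : #|~: [set X]| = (#|F| ^ (v.*2)).-1.
  by rewrite cardsC1 card_mx mul1n.
rewrite -e1 -[RHS]sum1_card (partition_big_imset h) /= -LX_eq.
rewrite -sum_nat_const; apply: eq_bigr => L.
rewrite LX_eq => /imsetP [Y]; rewrite !inE => hY ->.
by rewrite sum1_card -(fiber_card hY); apply: eq_card => Z; rewrite inE.
Qed.

Definition K := Kset F v.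
Definition d i := c1 X i - c0 X i ^+ 2.
Definition w (P : V) i := c0 P i - c0 X i.

Lemma exists_i0 : exists i0, d i0 != 0.
Proof.
move: hX; rewrite inE inK negb_forall => /existsP [i0 hi0].
by exists i0; rewrite /d subr_eq0.
Qed.

Lemma XnotK : X \notin K.
Proof. by move: hX; rewrite inE. Qed.

Lemma K_neqX P : P \in K -> P != X.
Proof. by move=> hP; apply: contraNneq XnotK => <-. Qed.

Lemma c0_comb (P : V) l i : c0 (X + l *: (P - X)) i = c0 X i + l * (c0 P i - c0 X i).
Proof. by rewrite /c0 !mxE. Qed.
Lemma c1_comb (P : V) l i : c1 (X + l *: (P - X)) i = c1 X i + l * (c1 P i - c1 X i).
Proof. by rewrite /c1 !mxE. Qed.

Lemma kl P l : P \in K ->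
  (X + l *: (P - X) \in K) = (l == 1) || [forall i, d i + l * w P i ^+ 2 == 0].
Proof.
move=> hP; move: (hP); rewrite inK => /forallP hP'.
rewrite inK; have [->|l1] := eqVneq l 1.
  by rewrite scale1r addrC subrK; rewrite inK in hP.
rewrite /=; apply: eq_forallb => i.
rewrite c0_comb c1_comb (eqP (hP' i)) -subr_eq0.
have -> : c1 X i + l * (c0 P i ^+ 2 - c1 X i) - (c0 X i + l * (c0 P i - c0 X i)) ^+ 2
  = (1 - l) * (d i + l * w P i ^+ 2) by rewrite /d /w; ring.
by rewrite mulf_eq0 subr_eq0 eq_sym (negbTE l1).
Qed.

Lemma lam_uniq P l m : (forall i, d i + l * w P i ^+ 2 = 0) ->
  (forall i, d i + m * w P i ^+ 2 = 0) -> l = m.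
Proof.
move=> hl hm; have [i0 hi0] := exists_i0.
have hw : w P i0 ^+ 2 != 0.
  by apply: contraNneq hi0 => e; move: (hl i0); rewrite e mulr0 addr0 => ->.
have : (l - m) * w P i0 ^+ 2 = 0.
  rewrite mulrBl; apply/eqP; rewrite subr_eq add0r; apply/eqP.
  by apply: (addrI (d i0)); rewrite hl hm.
by move/eqP; rewrite mulf_eq0 (negbTE hw) orbF subr_eq0 => /eqP.
Qed.


Definition type2 (P : V) := [exists l, (l != 1) && [forall i, d i + l * w P i ^+ 2 == 0]].
Definition wt (P : V) : nat := if type2 P then 1 else 2.

Lemma comb_inj (P : V) : P != X -> injective (fun l : F => X + l *: (P - X)).
Proof.
move=> hP l l' /addrI /eqP; rewrite -subr_eq0 -scalerBl scaler_eq0 subr_eq0.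
by rewrite (negbTE (_ : P - X != 0)) ?orbF ?subr_eq0 // => /eqP.
Qed.

Lemma fiber_mem P Q : P \in K ->
  (Q \in K) && (h Q == h P) =
  [exists l, (Q == X + l *: (P - X)) && ((l == 1) || [forall i, d i + l * w P i ^+ 2 == 0])].
Proof.
move=> hP; apply/andP/existsP.
  case=> hQ; rewrite h_eq ?K_neqX // => /existsP [l /eqP eQ].
  by exists l; rewrite eQ eqxx /= -kl // -eQ.
case=> l /andP [/eqP eQ hl]; rewrite -(kl _ hP) -eQ in hl.
split=> //; rewrite h_eq ?K_neqX //; apply/existsP; exists l; by rewrite eQ.
Qed.

Lemma fiberK P : P \in K -> (\sum_(Q in K | h Q == h P) wt Q = 2)%N.
Proof.
move=> hP; have hPX := K_neqX hP.
case: (boolP (type2 P)) => t2.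
  move: (t2) => /existsP [l0 /andP [l01 /forallP hl0]].
  set Q0 := X + l0 *: (P - X).
  have l00 : l0 != 0.
    have [i0 hi0] := exists_i0; apply: contraNneq hi0 => e.
    by move: (hl0 i0); rewrite e mul0r addr0.
  have hQ0 : Q0 \in K by rewrite kl // (negbTE l01) /=; apply/forallP.
  have PQ : P != Q0.
    apply: contra l01 => /eqP e; apply/eqP; apply: (comb_inj hPX).
    by rewrite /= scale1r subrKC.
  have eP : P = X + l0^-1 *: (Q0 - X).
    by rewrite /Q0 [X + l0 *: _]addrC addrK scalerA mulVf // scale1r subrKC.
  have t2Q : type2 Q0.
    have := hP; rewrite eP kl ?invr_eq1 ?(negbTE l01) //= => hf.
    by apply/existsP; exists l0^-1; rewrite invr_eq1 l01.
  rewrite (eq_bigl (mem [set P; Q0])).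
    rewrite big_setU1 ?inE // big_set1 /wt t2 t2Q //.
  move=> Q; rewrite !inE fiber_mem //; apply/existsP/idP.
    case=> l /andP [/eqP -> /orP [/eqP ->|/forallP hl]].
      by rewrite scale1r subrKC eqxx.
    rewrite (lam_uniq (fun i => eqP (hl i)) (fun i => eqP (hl0 i))).
    by rewrite eqxx orbT.
  case/orP => /eqP ->.
    by exists 1; rewrite scale1r subrKC !eqxx.
  by exists l0; rewrite eqxx /=; apply/orP; right; apply/forallP.
rewrite (eq_bigl (mem [set P])).
  by rewrite big_set1 /wt (negbTE t2).
move=> Q; rewrite !inE fiber_mem //; apply/existsP/idP.
  case=> l /andP [/eqP -> /orP [/eqP ->|hl]].
    by rewrite scale1r subrKC eqxx.
  case: (eqVneq l 1) => [->|l1]; first by rewrite scale1r subrKC eqxx.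
  by case/negP: t2; apply/existsP; exists l; rewrite l1.
move/eqP ->; exists 1; by rewrite scale1r subrKC !eqxx.
Qed.


Lemma sqr_inj : injective (fun x : F => x ^+ 2).
Proof.
move=> x y /= e; apply/eqP; rewrite -subr_eq0.
have : (x - y) ^+ 2 == 0.
  have -> : (x - y) ^+ 2 = x ^+ 2 - y ^+ 2 + 2%:R * (y ^+ 2 - x * y) by ring.
  by rewrite h2 mul0r addr0 e subrr.
by rewrite expf_eq0.
Qed.

Definition sq := invF sqr_inj.

Lemma sqK x : sq x ^+ 2 = x.
Proof. exact: (f_invF sqr_inj x). Qed.
Lemma sqK' x : sq (x ^+ 2) = x.
Proof. exact: (invF_f sqr_inj x). Qed.

Lemma Kpt_inj : injective (@Kpt F v).
Proof.
move=> a b e; apply/ffunP => i.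
have := congr1 (fun Y : V => Y 0 (ev i)) e.
by rewrite /Kpt !mxE /= odd_double ohalf_ev.
Qed.

Lemma card_K : #|K| = (#|F| ^ v)%N.
Proof. by rewrite /K /Kset card_imset ?card_ffun ?card_ord //; exact: Kpt_inj. Qed.

Lemma c0_Kpt a i : c0 (Kpt a) i = a i.
Proof. by rewrite /c0 /Kpt mxE /= odd_double ohalf_ev. Qed.

Definition a_of (l : F) : {ffun 'I_v -> F} := [ffun i => c0 X i + sq (- d i / l)].

Lemma card_T2 : #|[set Q in K | type2 Q]| = (#|F| - 2)%N.
Proof.
have eT : [set Q in K | type2 Q] = (fun l => Kpt (a_of l)) @: ~: [set 0; 1].
  apply/setP => Q; rewrite inE; apply/andP/imsetP.
    case=> /imsetP [a _ ->] /existsP [l /andP [l1 /forallP hl]].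
    have l0 : l != 0.
      have [i0 hi0] := exists_i0; apply: contraNneq hi0 => e.
      by move: (hl i0); rewrite e mul0r addr0.
    exists l; first by rewrite !inE negb_or l0 l1.
    congr Kpt; apply/ffunP => i; rewrite ffunE.
    have := eqP (hl i); rewrite /w c0_Kpt => e.
    have e2 : (a i - c0 X i) ^+ 2 = - d i / l.
      apply: (mulfI l0); rewrite [RHS]mulrC divfK //; apply/eqP.
      by rewrite -addr_eq0 addrC e.
    by rewrite -e2 sqK' addrC subrK.
  case=> l; rewrite !inE negb_or => /andP [l0 l1] ->.
  split; first by apply/imsetP; exists (a_of l).
  apply/existsP; exists l; rewrite l1 /=; apply/forallP => i.
  by rewrite /w c0_Kpt ffunE [c0 X i + _]addrC addrK sqK mulrC divfK // subrr.
rewrite eT card_in_imset.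
  by rewrite cardsCs setCK cards2 eq_sym oner_neq0.
move=> l m; rewrite !inE !negb_or => /andP [l0 _] /andP [m0 _] e.
have hl : forall i, d i + l * w (Kpt (a_of l)) i ^+ 2 = 0.
  by move=> i; rewrite /w c0_Kpt ffunE [c0 X i + _]addrC addrK sqK mulrC divfK // subrr.
have hm : forall i, d i + m * w (Kpt (a_of l)) i ^+ 2 = 0.
  by move=> i; rewrite e /w c0_Kpt ffunE [c0 X i + _]addrC addrK sqK mulrC divfK // subrr.
exact: lam_uniq hl hm.
Qed.


Lemma sum_wt : (\sum_(Q in K) wt Q = 2 * #|h @: K|)%N.
Proof.
rewrite (partition_big_imset h) /= -sum1_card big_distrr /=.
apply: eq_bigr => L /imsetP [P hP ->]; rewrite muln1 -(fiberK hP).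
by apply: eq_bigl => Q.
Qed.

Lemma sum_wt2 : (\sum_(Q in K) wt Q + #|[set Q in K | type2 Q]| = 2 * #|K|)%N.
Proof.
have e : #|[set Q in K | type2 Q]| = (\sum_(Q in K) (type2 Q : nat))%N.
  rewrite -sum1_card [RHS]big_mkcond /= [LHS]big_mkcond /=.
  by apply: eq_bigr => Q _; rewrite inE; case: (Q \in K); case: (type2 Q).
rewrite e -big_split /= mulnC -sum_nat_const; apply: eq_bigr => Q _.
by rewrite /wt; case: (type2 Q).
Qed.

Lemma S_eq : [set L in lines F (v.*2) | (X \in L) && (L \subset Aset F v)] = LX :\: h @: K.
Proof.
apply/setP => L.
have eLX : (L \in LX) = (L \in lines F _) && (X \in L) by rewrite inE.
rewrite !inE andbA -eLX andbC.
case: (boolP (L \in LX)) => hL; rewrite ?andbF //= andbT.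
move: hL; rewrite LX_eq => /imsetP [Y]; rewrite !inE => hY ->.
rewrite andbT; apply/idP/idP.
  move=> sub; apply/imsetP => [[P hP eP]].
  have := subsetP sub P; rewrite eP mem_h => /(_ isT).
  by rewrite inE hP.
move=> nK; apply/subsetP => Z hZ; rewrite inE.
apply: contra nK => ZK; apply/imsetP; exists Z => //.
apply/esym/eqP; rewrite h_eq ?K_neqX //.
by move: hZ => /imsetP [t _ ->]; apply/existsP; exists t.
Qed.

Lemma hK_sub : h @: K \subset LX.
Proof.
rewrite LX_eq; apply/subsetP => L /imsetP [P hP ->].
by apply/imsetP; exists P => //; rewrite !inE K_neqX.
Qed.


End P12.

Lemma arith (q Q L I m : nat) : (1 <= m)%N -> q = (2 * m)%N -> (q <= Q)%N ->
  (L * (q - 1) = Q * Q - 1)%N -> (2 * I + (q - 2) = 2 * Q)%N ->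
  (L - I = L - Q + m - 1)%N.
Proof.
move=> m1 eq qQ eL eI.
have LQ : (Q <= L)%N.
  rewrite -(@leq_pmul2r (q - 1)); last by lia.
  rewrite eL; nia.
lia.
Qed.

Theorem proposition12 (F : finFieldType) (k v : nat) (hq : #|F| = (2 ^ k)%N)
  (hv : (1 <= v)%N) (X : 'rV[F]_(v.*2)) (hX : X \in Aset F v) :
  #|[set L in lines F (v.*2) | (X \in L) && (L \subset Aset F v)]|
  = (Bqv #|F| v - #|F| ^ v + (#|F| - 2)./2)%N.
Proof.
have h2 : (2%:R : F) = 0.
  by apply: pcharf0; apply: (card_finPcharP hq).
have q1 := finNzRing_gt1 F.
have k1 : (0 < k)%N.
  by move: q1; rewrite hq; case: (k).
rewrite (S_eq hX) cardsD (setIidPr (hK_sub hX)).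
have A1 := card_LX X.
have A2 := sum_wt hX.
have A3 := sum_wt2 X.
rewrite A2 (card_T2 hX h2) card_K in A3.
have eB : Bqv #|F| v = #|LX X|.
  rewrite /Bqv mul2n !subn1 -A1 mulnK //; rewrite -subn1 subn_gt0; exact: q1.
rewrite eB.
set m := (2 ^ k.-1)%N.
have em : #|F| = (2 * m)%N by rewrite hq /m -expnS prednK.
have m1 : (1 <= m)%N by rewrite /m expn_gt0.
have -> : ((#|F| - 2)./2 = m - 1)%N.
  rewrite em; have -> : (2 * m - 2 = (m - 1).*2)%N by rewrite -mul2n mulnBr muln1.
  by rewrite doubleK.
rewrite addnBA //.
apply: (arith m1 em).
- rewrite -{1}(expn1 #|F|); apply: leq_pexp2l => //; exact: ltnW q1.
- by rewrite !subn1 -expnD addnn.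
- by [].
Qed.
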